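(* Let $K\ge1$, let $\mathbf{\Phi}\in\mathbb{R}^{m\times n}$ satisfy the RIP of order $2K$ with $\delta:=\delta_{2K}\in(0,1)$. Let $\mathbf{x}\in\mathbb{R}^n$ with $\mathcal{T}=\mathrm{supp}(\mathbf{x})$, $|\mathcal{T}|=K$, let $\kappa:=\max_{i,j\in\mathcal{T}}|x_i|/|x_j|$, let $\mathbf{v}\in\mathbb{R}^m$, $\mathbf{y}=\mathbf{\Phi}\mathbf{x}+\mathbf{v}$, and assume $\mathrm{SNR}\ge\kappa^2\delta^{-3/2}$. Then for every $0\le k\le K-\lceil\delta^{1/2}K\rceil$ (with $k<K$), the OMP residuals satisfy $$\|\mathbf{r}^k\|_2^2-\|\mathbf{r}^{k+1}\|_2^2 \ge (1-7\delta^{1/2})\,\bigl(x^k_{\delta^{1/2}}\bigr)^2.$$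
   Context: $\phi_i$ is the $i$-th column of $\mathbf{\Phi}$. RIP: for an integer $s\ge1$, the isometry constant $\delta_s$ of $\mathbf{\Phi}$ is the smallest $c\in[0,1)$ such that $(1-c)\|\mathbf{z}\|_2^2 \le \|\mathbf{\Phi}\mathbf{z}\|_2^2 \le (1+c)\|\mathbf{z}\|_2^2$ for all $s$-sparse $\mathbf{z}$. $\mathrm{SNR} := \|\mathbf{\Phi}\mathbf{x}\|_2^2/\|\mathbf{v}\|_2^2$. OMP with input $\mathbf{\Phi},\mathbf{y},K$: set $\mathcal{T}^0=\emptyset$, $\mathbf{r}^0=\mathbf{y}$; for $k=1,\dots,K$: choose $t^k \in \arg\max_{i\notin\mathcal{T}^{k-1}} |\langle\phi_i,\mathbf{r}^{k-1}\rangle|$ (ties arbitrary), set $\mathcal{T}^k=\mathcal{T}^{k-1}\cup\{t^k\}$, $\mathbf{x}^k = \arg\min_{\mathrm{supp}(\mathbf{u})\subseteq\mathcal{T}^k}\|\mathbf{y}-\mathbf{\Phi}\mathbf{u}\|_2$, $\mathbf{r}^k=\mathbf{y}-\mathbf{\Phi}\mathbf{x}^k$. For $0\le k\le K$: $\Gamma^k:=\mathcal{T}\setminus\mathcal{T}^k$; for $\tau\in(0,1]$, $x^k_\tau$ denotes the magnitude of the $\lceil\tau K\rceil$-th largest entry (in magnitude) of $\mathbf{x}_{\Gamma^k}$, with $x^k_\tau:=0$ if $\lceil\tau K\rceil>|\Gamma^k|$. *)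

(* Defs.v *)
(* The real field is abstracted as an arbitrary R : rcfType
   (real closed field; needed for square roots), which includes the reals. *)
From HB Require Import structures.
From mathcomp Require Import all_boot all_order all_algebra.
Set Implicit Arguments. Unset Strict Implicit. Unset Printing Implicit Defensive.
Import Order.TTheory GRing.Theory Num.Theory.
Local Open Scope ring_scope.

Section Defs.
Variable R : rcfType.

Definition sqnorm (p : nat) (z : 'cV[R]_p) : R := \sum_(i < p) (z i 0) ^+ 2.

Definition supp (p : nat) (z : 'cV[R]_p) : {set 'I_p} := [set i | z i 0 != 0].

Definition sparse (p s : nat) (z : 'cV[R]_p) : Prop := (#|supp z| <= s)%N.

Definition RIP_ineq (m n s : nat) (Phi : 'M[R]_(m, n)) (c : R) : Prop :=
  forall z : 'cV[R]_n, sparse s z ->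
    (1 - c) * sqnorm z <= sqnorm (Phi *m z) /\ sqnorm (Phi *m z) <= (1 + c) * sqnorm z.

Definition is_RIC (m n s : nat) (Phi : 'M[R]_(m, n)) (d : R) : Prop :=
  [/\ 0 <= d, d < 1, RIP_ineq s Phi d &
      forall c, 0 <= c -> c < 1 -> RIP_ineq s Phi c -> d <= c].

Definition colcorr (m n : nat) (Phi : 'M[R]_(m, n)) (i : 'I_n) (r : 'cV[R]_m) : R :=
  \sum_(j < m) Phi j i * r j 0.

Definition resid (m n : nat) (Phi : 'M[R]_(m, n)) (y : 'cV[R]_m) (u : 'cV[R]_n)
  : 'cV[R]_m := y - Phi *m u.

(* (T, xs) is a run of OMP on input (Phi, y, K) (with arbitrary tie-breaking):
   T k = T^k, xs k = x^k, residual r^k = y - Phi x^k. *)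
Definition OMP_run (m n : nat) (Phi : 'M[R]_(m, n)) (y : 'cV[R]_m) (K : nat)
  (T : nat -> {set 'I_n}) (xs : nat -> 'cV[R]_n) : Prop :=
  [/\ T 0%N = set0, xs 0%N = 0 &
   forall k, (k < K)%N ->
     exists t : 'I_n,
       [/\ t \notin T k,
           (forall i, i \notin T k ->
              `|colcorr Phi i (resid Phi y (xs k))| <= `|colcorr Phi t (resid Phi y (xs k))|),
           T k.+1 = t |: T k,
           supp (xs k.+1) \subset T k.+1 &
           (forall u : 'cV[R]_n, supp u \subset T k.+1 ->
              sqnorm (resid Phi y (xs k.+1)) <= sqnorm (resid Phi y u))]].

Definition is_ceil (a : R) (c : nat) : Prop := (c%:R - 1 < a) /\ (a <= c%:R).

(* magnitude of the c-th largest entry (in magnitude) of x restricted to A,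
   and 0 if c > |A| (c >= 1 intended) *)
Definition kth_largest (n : nat) (x : 'cV[R]_n) (A : {set 'I_n}) (c : nat) : R :=
  if (1 <= c <= #|A|)%N
  then nth 0 (sort (fun a b : R => b <= a) [seq `|x i 0| | i in A]) c.-1
  else 0.

Definition dyn_range (n : nat) (x : 'cV[R]_n) : R :=
  \big[Num.max/0]_(i in supp x) \big[Num.max/0]_(j in supp x) (`|x i 0| / `|x j 0|).

End Defs.

(* Main.v *)
Require Import Defs.
From HB Require Import structures.
From mathcomp Require Import all_boot all_order all_algebra.
From mathcomp Require Import ring lra zify.
Set Implicit Arguments. Unset Strict Implicit. Unset Printing Implicit Defensive.
Import Order.TTheory GRing.Theory Num.Theory.
Local Open Scope ring_scope.


Section Aux.
Variable R : rcfType.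

Definition dot (p : nat) (a b : 'cV[R]_p) : R := \sum_(i < p) a i 0 * b i 0.

Lemma sqnormE p (a : 'cV[R]_p) : sqnorm a = dot a a.
Proof. by apply: eq_bigr => i _; rewrite expr2. Qed.

Lemma sqnorm_ge0 p (a : 'cV[R]_p) : 0 <= sqnorm a.
Proof. by apply: sumr_ge0 => i _; rewrite sqr_ge0. Qed.

Lemma dotC p (a b : 'cV[R]_p) : dot a b = dot b a.
Proof. by apply: eq_bigr => i _; rewrite mulrC. Qed.

Lemma dotDl p (a b c : 'cV[R]_p) : dot (a + b) c = dot a c + dot b c.
Proof. by rewrite /dot -big_split; apply: eq_bigr => i _; rewrite !mxE mulrDl. Qed.

Lemma dotNl p (a c : 'cV[R]_p) : dot (- a) c = - dot a c.
Proof. by rewrite /dot -sumrN; apply: eq_bigr => i _; rewrite !mxE mulNr. Qed.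

Lemma dotZl p l (a c : 'cV[R]_p) : dot (l *: a) c = l * dot a c.
Proof. by rewrite /dot mulr_sumr; apply: eq_bigr => i _; rewrite !mxE mulrA. Qed.

Lemma dotBl p (a b c : 'cV[R]_p) : dot (a - b) c = dot a c - dot b c.
Proof. by rewrite dotDl dotNl. Qed.

Lemma dotDr p (a b c : 'cV[R]_p) : dot c (a + b) = dot c a + dot c b.
Proof. by rewrite dotC dotDl !(dotC c). Qed.
Lemma dotBr p (a b c : 'cV[R]_p) : dot c (a - b) = dot c a - dot c b.
Proof. by rewrite dotC dotBl !(dotC c). Qed.
Lemma dotZr p l (a c : 'cV[R]_p) : dot c (l *: a) = l * dot c a.
Proof. by rewrite dotC dotZl dotC. Qed.

Lemma sqnormD p (a b : 'cV[R]_p) :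
  sqnorm (a + b) = sqnorm a + 2 * dot a b + sqnorm b.
Proof. rewrite !sqnormE dotDl !dotDr (dotC b a); ring. Qed.
Lemma sqnormB p (a b : 'cV[R]_p) :
  sqnorm (a - b) = sqnorm a - 2 * dot a b + sqnorm b.
Proof. rewrite !sqnormE dotBl !dotBr (dotC b a); ring. Qed.
Lemma sqnormZ p l (a : 'cV[R]_p) : sqnorm (l *: a) = l ^+ 2 * sqnorm a.
Proof. rewrite !sqnormE dotZl dotZr; ring. Qed.

Lemma quad_disc (A p C : R) : 0 <= A ->
  (forall l : R, 0 <= l ^+ 2 * A - 2 * l * p + C) -> p ^+ 2 <= A * C.
Proof.
move=> A0 H; have C0 : 0 <= C by have := H 0; rewrite expr2 !(mul0r, mulr0) subr0 add0r.
have [A0'|Ap] := eqVneq A 0.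
  rewrite A0' mul0r.
  have [->|p0] := eqVneq p 0; first by rewrite expr0n.
  have := H ((C + 1) / (2 * p)); rewrite A0' mulr0 add0r.
  have -> : 2 * ((C + 1) / (2 * p)) * p = C + 1.
    by field; rewrite p0.
  lra.
have Apos : 0 < A by rewrite lt_def Ap A0.
have := H (p / A).
have -> : (p / A) ^+ 2 * A - 2 * (p / A) * p + C = C - p ^+ 2 / A.
  by field; rewrite Ap.
rewrite subr_ge0 ler_pdivrMr // => h; rewrite mulrC; exact: h.
Qed.

Lemma CS p (a b : 'cV[R]_p) : dot a b ^+ 2 <= sqnorm a * sqnorm b.
Proof.
apply: quad_disc; first exact: sqnorm_ge0.
move=> l; have := sqnorm_ge0 (l *: a - b).
by rewrite sqnormB sqnormZ dotZl mulrA.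
Qed.


Lemma supp_subP p (z : 'cV[R]_p) (U : {set 'I_p}) :
  (forall i, i \notin U -> z i 0 = 0) -> supp z \subset U.
Proof.
move=> H; apply/subsetP => i; rewrite inE; apply: contraR => iU.
by rewrite H.
Qed.

Lemma supp_out p (z : 'cV[R]_p) (U : {set 'I_p}) i :
  supp z \subset U -> i \notin U -> z i 0 = 0.
Proof.
move=> /subsetP H iU; apply/eqP; apply: contraNT iU => zi.
by apply: H; rewrite inE.
Qed.

Lemma sparse_sub p s (z : 'cV[R]_p) (U : {set 'I_p}) :
  supp z \subset U -> (#|U| <= s)%N -> sparse s z.
Proof. by move=> H1 H2; apply: leq_trans H2; apply: subset_leq_card. Qed.

Lemma dot_mul m n (Phi : 'M[R]_(m, n)) (u : 'cV[R]_n) (r : 'cV[R]_m) :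
  dot (Phi *m u) r = \sum_(i < n) u i 0 * colcorr Phi i r.
Proof.
rewrite /dot /colcorr.
under eq_bigr do rewrite mxE mulr_suml.
rewrite exchange_big /=; apply: eq_bigr => i _.
rewrite mulr_sumr; apply: eq_bigr => j _; ring.
Qed.

Lemma near_orth m n s (Phi : 'M[R]_(m, n)) d (a b : 'cV[R]_n) (U : {set 'I_n}) :
  0 <= d -> RIP_ineq s Phi d -> (#|U| <= s)%N -> supp a \subset U -> supp b \subset U ->
  (forall i, a i 0 * b i 0 = 0) ->
  dot (Phi *m a) (Phi *m b) ^+ 2 <= (d * sqnorm a) * (d * sqnorm b).
Proof.
move=> d0 H HU Ha Hb Hab.
have dab : dot a b = 0 by apply: big1 => i _; apply: Hab.
apply: quad_disc; first by rewrite mulr_ge0 // sqnorm_ge0.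
move=> l.
have sp : forall e : R, sparse s (l *: a + e *: b).
  move=> e; apply: (sparse_sub _ HU); apply: supp_subP => i iU.
  by rewrite !mxE (supp_out Ha iU) (supp_out Hb iU) !mulr0 addr0.
have [_ H1] := H _ (sp 1).
have [H2 _] := H _ (sp (-1)).
move: H1 H2; rewrite !scaleN1r !scale1r !mulmxDr (mulmxN Phi b) -!scalemxAr.
rewrite !sqnormB !sqnormD !sqnormZ !dotZl dab !mulr0.

set SA := sqnorm (Phi *m a); set SB := sqnorm (Phi *m b).
set D := dot (Phi *m a) (Phi *m b); set sa := sqnorm a; set sb := sqnorm b.
move=> H1 H2. nra.
Qed.


Lemma supp_lin p (a b : 'cV[R]_p) (U : {set 'I_p}) l e :
  supp a \subset U -> supp b \subset U -> supp (l *: a + e *: b) \subset U.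
Proof.
move=> Ha Hb; apply: supp_subP => i iU.
by rewrite !mxE (supp_out Ha iU) (supp_out Hb iU) !mulr0 addr0.
Qed.

Lemma orth m n (Phi : 'M[R]_(m,n)) y (xk : 'cV[R]_n) (U : {set 'I_n}) h :
  (forall u, supp u \subset U -> sqnorm (resid Phi y xk) <= sqnorm (resid Phi y u)) ->
  supp xk \subset U -> supp h \subset U -> dot (Phi *m h) (resid Phi y xk) = 0.
Proof.
move=> Hopt Hx Hh.
set d := dot _ _.
have : d ^+ 2 <= sqnorm (Phi *m h) * 0.
  rewrite -[d ^+ 2]sqrrN; apply: quad_disc; first exact: sqnorm_ge0.
  move=> l; have := Hopt (1 *: xk + (- l) *: h) (supp_lin _ _ Hx Hh).
  have -> : resid Phi y (1 *: xk + - l *: h) = resid Phi y xk + l *: (Phi *m h).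
    rewrite /resid scale1r mulmxDr -scalemxAr scaleNr; by rewrite opprD opprK addrA.
  rewrite sqnormD sqnormZ dotZr (dotC (resid _ _ _)) -/d; nra.
rewrite mulr0 => H; apply/eqP; rewrite -sqrf_eq0 eq_le H sqr_ge0 //.
Qed.

Lemma supp0 p (z : 'cV[R]_p) : supp z \subset set0 -> z = 0.
Proof.
by move=> H; apply/matrixP => i j; rewrite ord1 mxE (supp_out H) ?inE.
Qed.

Lemma omp_inv m n (Phi : 'M[R]_(m,n)) y K T xs :
  OMP_run Phi y K T xs -> forall k, (k <= K)%N ->
  [/\ (#|T k| <= k)%N, supp (xs k) \subset T k &
      forall u, supp u \subset T k -> sqnorm (resid Phi y (xs k)) <= sqnorm (resid Phi y u)].
Proof.
case=> T0 x0 Hs; elim=> [|k IH] kK.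
  rewrite T0 x0 cards0; split => //.
    by apply: supp_subP => i; rewrite mxE.
  by move=> u /supp0 ->.
have [t [tT Hmax HT Hsupp Hopt]] := Hs k kK.
have [IH1 _ _] := IH (ltnW kK).
split => //; rewrite HT cardsU1 -add1n.
by rewrite leq_add // leq_b1.
Qed.

Definition ecol n (t : 'I_n) : 'cV[R]_n := delta_mx t 0.

Lemma colcorr_dot m n (Phi : 'M[R]_(m,n)) t r :
  colcorr Phi t r = dot (Phi *m ecol t) r.
Proof.
rewrite dot_mul (bigD1 t) //= big1 => [|i it]; first by rewrite !mxE !eqxx mul1r addr0.
by rewrite !mxE (negbTE it) mul0r.
Qed.

Lemma sqnorm_ecol n (t : 'I_n) : sqnorm (ecol t) = 1.
Proof.
rewrite /sqnorm (bigD1 t) //= big1 => [|i it]; first by rewrite !mxE !eqxx expr1n addr0.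
by rewrite !mxE (negbTE it) expr0n.
Qed.

Lemma supp_ecol n (t : 'I_n) : supp (ecol t) \subset [set t].
Proof. by apply: supp_subP => i; rewrite inE !mxE => /negbTE ->. Qed.


Lemma kth_facts n (x : 'cV[R]_n) (A : {set 'I_n}) c : (1 <= c <= #|A|)%N ->
  (exists2 j, j \in A & kth_largest x A c = `|x j 0|) /\
  (c <= #|[set i in A | (kth_largest x A c <= `|x i 0|)%R]|)%N.
Proof.
move=> Hc; rewrite /kth_largest Hc.
case/andP: Hc => c1 cA.
set ge := (fun a b : R => b <= a).
set s := [seq `|x i 0| | i in A].
set ss := sort ge s.
have ssize : size ss = #|A| by rewrite size_sort /s size_map -cardE.
have cs : (c.-1 < size ss)%N by rewrite ssize; case: c c1 cA.
set X := nth 0 ss c.-1.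
split.
  have : X \in s by rewrite -(perm_mem (permEl (perm_sort ge s))) mem_nth.
  by case/mapP => j; rewrite mem_enum => jA ->; exists j.
have tot : total ge by move=> a b; rewrite /ge le_total.
have tr : transitive ge by move=> a b d; rewrite /ge => h1 h2; apply: le_trans h2 h1.
have rf : reflexive ge by move=> a; rewrite /ge.
have sorted_ss : sorted ge ss by apply: sort_sorted.
have H1 : (c <= count (fun a => (X <= a)%R) ss)%N.
  rewrite -(cat_take_drop c ss) count_cat.
  have : count (fun a => (X <= a)%R) (take c ss) = c.
    have E : size (take c ss) = c by rewrite size_takel // ssize.
    rewrite -[RHS]E; apply/eqP; rewrite -all_count; apply/(all_nthP 0) => i.
    rewrite size_take ssize => hi.
    have hic : (i < c)%N.
      by move: hi; case: (ltnP c #|A|) => h1 h2 //; apply: leq_trans h2 h1.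
    rewrite nth_take //.
    apply: (sorted_leq_nth tr rf 0 sorted_ss); rewrite ?inE.
    - by apply: leq_trans hic _; rewrite ssize.
    - exact: cs.
    - by move: hic; case: (c) => // c'.
  by move=> ->; apply: leq_addr.
apply: (leq_trans H1).
rewrite (permP (permEl (perm_sort ge s))) /s count_map.
have -> : #|[set i in A | (X <= `|x i 0|)%R]| = #|[seq i <- enum A | (X <= `|x i 0|)%R]|.
  by apply: eq_card => i; rewrite inE mem_filter mem_enum andbC.
rewrite (card_uniqP _) ?size_filter //; apply: filter_uniq; exact: enum_uniq.
Qed.


Lemma kappa_ge n (x : 'cV[R]_n) i j : i \in supp x -> j \in supp x ->
  `|x i 0| / `|x j 0| <= dyn_range x.
Proof.
move=> hi hj; rewrite /dyn_range.
apply: le_trans (le_bigmax_cond _ _ hi).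
exact: (le_bigmax_cond _ _ hj).
Qed.

Lemma le_of_sq (a b : R) : 0 <= b -> a ^+ 2 <= b ^+ 2 -> a <= b.
Proof. move=> b0 h; rewrite leNgt; apply/negP => ab; nra. Qed.

Definition N p (z : 'cV[R]_p) := Num.sqrt (sqnorm z).

Lemma N_ge0 p (z : 'cV[R]_p) : 0 <= N z.
Proof. exact: sqrtr_ge0. Qed.

Lemma Nsq p (z : 'cV[R]_p) : N z ^+ 2 = sqnorm z.
Proof. by rewrite sqr_sqrtr // sqnorm_ge0. Qed.

Lemma abs_dot_le (d M : R) : 0 <= M -> d ^+ 2 <= M ^+ 2 -> - M <= d /\ d <= M.
Proof. move=> M0 h; split; [rewrite lerNl|]; apply: le_of_sq => //; by rewrite ?sqrrN. Qed.

Lemma CSN p (a b : 'cV[R]_p) : - (N a * N b) <= dot a b /\ dot a b <= N a * N b.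
Proof.
apply: abs_dot_le; first by rewrite mulr_ge0 ?N_ge0.
by rewrite exprMn !Nsq CS.
Qed.

Lemma near_orthN m n s (Phi : 'M[R]_(m, n)) d (a b : 'cV[R]_n) (U : {set 'I_n}) :
  0 <= d -> RIP_ineq s Phi d -> (#|U| <= s)%N -> supp a \subset U -> supp b \subset U ->
  (forall i, a i 0 * b i 0 = 0) ->
  - (d * N a * N b) <= dot (Phi *m a) (Phi *m b) /\ dot (Phi *m a) (Phi *m b) <= d * N a * N b.
Proof.
move=> d0 H HU Ha Hb Hab; apply: abs_dot_le; first by rewrite !mulr_ge0 ?N_ge0.
have := near_orth d0 H HU Ha Hb Hab.
by rewrite !exprMn !Nsq; move=> h; apply: le_trans h _; rewrite le_eqVlt; apply/orP; left; apply/eqP; ring.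
Qed.

Lemma dot_disj p (a b : 'cV[R]_p) : (forall i, a i 0 * b i 0 = 0) -> dot a b = 0.
Proof. by move=> h; apply: big1 => i _; apply: h. Qed.

End Aux.
Arguments ecol {R n}.
Arguments supp_ecol {R n}. Arguments sqnorm_ecol {R n}.

Section Aux2.
Variable R : rcfType.
Lemma sq_le_abs (X z : R) : 0 <= X -> X <= `|z| -> X ^+ 2 <= z ^+ 2.
Proof. move=> X0 h; rewrite -(real_normK (num_real z)); nra. Qed.
Lemma abs_le_sq (z Y : R) : `|z| <= Y -> z ^+ 2 <= Y ^+ 2.
Proof. move=> h; rewrite -(real_normK (num_real z)); have := normr_ge0 z; nra. Qed.
Lemma sum_const_le n (A : {set 'I_n}) (f : 'I_n -> R) (Y : R) :
  (forall i, i \notin A -> f i = 0) -> (forall i, i \in A -> f i <= Y) ->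
  \sum_i f i <= Y *+ #|A|.
Proof.
move=> h0 h1; rewrite (bigID (mem A)) /= [X in _ + X]big1 ?addr0; last first.
  by move=> i /h0.
rewrite -sumr_const; exact: ler_sum.
Qed.
Lemma sum_const_ge n (A : {set 'I_n}) (f : 'I_n -> R) (Y : R) :
  (forall i, 0 <= f i) -> (forall i, i \in A -> Y <= f i) ->
  Y *+ #|A| <= \sum_i f i.
Proof.
move=> h0 h1; rewrite (bigID (mem A)) /=.
have h3 : Y *+ #|A| <= \sum_(i in A) f i by rewrite -sumr_const; apply: ler_sum.
apply: le_trans h3 _; rewrite lerDl; exact: sumr_ge0.
Qed.
Lemma eqle (a b : R) : a = b -> a <= b. Proof. by move->. Qed.

Lemma core (s d a b w V e q X G K : R) : d = s ^+ 2 -> 0 < s -> s < 7%:R^-1 ->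
  0 < q -> 0 < X -> 0 <= b -> 0 <= w -> 0 <= V -> 0 <= e -> e ^+ 2 = 1 + d ->
  q * X <= a -> b ^+ 2 <= K * X ^+ 2 -> s * K <= q ^+ 2 ->
  V ^+ 2 <= d * (1 + d) * q ^+ 2 * X ^+ 2 ->
  (1 - d) * a ^+ 2 - d * a * (b + w) - e * a * V <= G * (q * a) ->
  (1 - d) * w <= d * (a + b) + e * V ->
  (1 - 3%:R * s) * X <= G.
Proof.
move=> dE s0 s7 q0 X0 b0 w0 V0 e0 eE aX bK sK VE H1 H2.
have d0 : 0 <= d by rewrite dE sqr_ge0.
have a0 : 0 < a by apply: lt_le_trans aX; rewrite mulr_gt0.
have K0 : 0 <= K.
  have : 0 <= K * X ^+ 2 by apply: le_trans bK; rewrite sqr_ge0.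
  by rewrite pmulr_lge0 // exprn_gt0.
have Hdb : d * b <= s * q * X.
  apply: le_of_sq; first by rewrite !mulr_ge0 // ltW.
  have h1 : (d * b) ^+ 2 <= d ^+ 2 * (K * X ^+ 2) by rewrite exprMn ler_wpM2l ?sqr_ge0.
  apply: le_trans h1 _; rewrite dE.
  have h2 : s ^+ 3 * (s * K) <= s ^+ 3 * q ^+ 2 by rewrite ler_wpM2l // exprn_ge0 // ltW.
  have h3 : s ^+ 3 * q ^+ 2 <= s ^+ 2 * q ^+ 2.
    have s3 : s ^+ 3 <= s ^+ 2 by rewrite !exprS expr0 !mulr1; nra.
    by rewrite ler_wpM2r ?sqr_ge0.
  have h4 : 0 <= X ^+ 2 by rewrite sqr_ge0.
  have := ler_wpM2r h4 (le_trans h2 h3).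
  move=> h5; apply: le_trans _ (le_trans h5 _); apply: eqle; ring.
have HeV : e * V <= (1 + d) * s * q * X.
  apply: le_of_sq; first by rewrite !mulr_ge0 ?ltW //; lra.
  rewrite exprMn eE.
  have : (1 + d) * V ^+ 2 <= (1 + d) * (d * (1 + d) * q ^+ 2 * X ^+ 2) by rewrite ler_wpM2l //; lra.
  move=> h; apply: le_trans h _; apply: eqle; rewrite dE; ring.
have H1' : (1 - d) * a - d * (b + w) - e * V <= G * q.
  rewrite -(ler_pM2r a0).
  have e1 : ((1 - d) * a - d * (b + w) - e * V) * a = (1 - d) * a ^+ 2 - d * a * (b + w) - e * a * V by ring.
  have e2 : G * q * a = G * (q * a) by ring.
  by rewrite e1 e2.
have d7 : d < 1 / 49%:R by rewrite dE; nra.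
have H3 : ((1 - d) ^+ 2 - d ^+ 2) * a - d * b - e * V <= (1 - d) * (G * q).
  have hd : 0 <= 1 - d by lra.
  have hd' : 0 <= d by rewrite dE sqr_ge0.
  have := ler_wpM2l hd H1'; have := ler_wpM2l hd' H2.
  move=> g1 g2; nra.
have H4 : ((1 - d) ^+ 2 - d ^+ 2) * (q * X) <= ((1 - d) ^+ 2 - d ^+ 2) * a.
  by rewrite ler_wpM2l //; nra.
have H5 : (1 - 3%:R * s) * (1 - d) * (q * X) <= (1 - d) * (G * q).
  apply: le_trans H3; apply: le_trans _ (lerB (lerB H4 Hdb) HeV).
  have hqX : 0 < q * X by rewrite mulr_gt0.
  have Cs : 0 <= s - s ^+ 2 - 4%:R * s ^+ 3.
    have h : 0 <= 1 - s - 4%:R * s ^+ 2 by nra.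
    have := mulr_ge0 (ltW s0) h; move=> h'; apply: le_trans h' _; apply: eqle; ring.
  rewrite -subr_ge0; apply: le_trans (mulr_ge0 Cs (ltW hqX)) _; apply: eqle; rewrite dE; ring.
have hq : 0 < (1 - d) * q by rewrite mulr_gt0 //; lra.
rewrite -(ler_pM2r hq); apply: le_trans _ (le_trans H5 _); apply: eqle; ring.
Qed.

Lemma final (s d g X G D : R) : d = s ^+ 2 -> 0 < s -> s < 7%:R^-1 -> 0 < X ->
  G = `|g| -> g ^+ 2 / (1 + d) <= D -> (1 - 3%:R * s) * X <= G ->
  (1 - 7%:R * s) * X ^+ 2 <= D.
Proof.
move=> dE s0 s7 X0 GE HD HG.
have d0 : 0 < 1 + d by rewrite dE; nra.
apply: le_trans HD; rewrite ler_pdivlMr // -(real_normK (num_real g)) -GE.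
have h1 : 0 <= (1 - 3%:R * s) * X by rewrite mulr_ge0 ?(ltW X0) //; lra.
have h2 : ((1 - 3%:R * s) * X) ^+ 2 <= G ^+ 2.
  by rewrite ler_sqr ?nnegrE //; apply: le_trans HG.
apply: le_trans h2; rewrite -subr_ge0.
have h3 : 0 <= s + 8%:R * s ^+ 2 + 7%:R * s ^+ 3 by nra.
apply: le_trans (mulr_ge0 h3 (sqr_ge0 X)) _; apply: eqle; rewrite dE; ring.
Qed.
End Aux2.



Theorem proposition2 (R : rcfType) (m n K : nat) (Phi : 'M[R]_(m, n))
  (delta : R) (x : 'cV[R]_n) (v : 'cV[R]_m)
  (T : nat -> {set 'I_n}) (xs : nat -> 'cV[R]_n) (c : nat) :
  (1 <= K)%N ->
  is_RIC (2 * K) Phi delta -> 0 < delta ->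
  #|supp x| = K ->
  (dyn_range x) ^+ 2 / (delta * Num.sqrt delta) * sqnorm v <= sqnorm (Phi *m x) ->
  OMP_run Phi (Phi *m x + v) K T xs ->
  is_ceil (Num.sqrt delta * K%:R) c ->
  forall k : nat, (k + c <= K)%N -> (k < K)%N ->
    sqnorm (resid Phi (Phi *m x + v) (xs k))
      - sqnorm (resid Phi (Phi *m x + v) (xs k.+1))
    >= (1 - 7%:R * Num.sqrt delta) * (kth_largest x (supp x :\: T k) c) ^+ 2.
Proof.
move=> K1 [d0 d1 RIP _] dpos cardT SNR omp [ceil1 ceil2] k kc kK.
set y := Phi *m x + v.
set s := Num.sqrt delta.
have {ceil2}ceil2 : s * K%:R <= c%:R by [].
have {ceil1}ceil1 : c%:R - 1 < s * K%:R by [].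
have {SNR}SNR : dyn_range x ^+ 2 / (delta * s) * sqnorm v <= sqnorm (Phi *m x) by [].
have s0 : 0 < s by rewrite sqrtr_gt0.
have dE : delta = s ^+ 2 by rewrite sqr_sqrtr // ltW.
have s1 : s < 1 by rewrite dE in d1; nra.
have [Ik Isupp Iopt] := omp_inv omp (ltnW kK).
have [_ Isupp' Iopt'] := omp_inv omp kK.
case: omp => _ _ Hs; have [t [tT Hmax HT _ _]] := Hs k kK.
set r := resid Phi y (xs k).
set g := colcorr Phi t r.
have K2 : (1 <= 2 * K)%N by move: K1; clear; lia.
have dd0 : 0 <= 1 + delta by rewrite addr_ge0.
have Dge : g ^+ 2 / (1 + delta) <= sqnorm r - sqnorm (resid Phi y (xs k.+1)).
  set al := g / (1 + delta).
  have sub1 : supp (xs k) \subset T k.+1 by rewrite HT; apply: subset_trans Isupp (subsetUr _ _).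
  have sub2 : supp (ecol (R:=R) t) \subset T k.+1.
    rewrite HT; apply: (subset_trans (supp_ecol t)); by rewrite sub1set setU11.
  have := Iopt' _ (supp_lin 1 al sub1 sub2).
  have -> : resid Phi y (1 *: xs k + al *: ecol t) = r - al *: (Phi *m ecol t).
    by rewrite /resid /r /resid scale1r mulmxDr -scalemxAr opprD addrA.
  rewrite [sqnorm (r - _)]sqnormB sqnormZ dotZr dotC -colcorr_dot -/g.
  have Pe : sqnorm (Phi *m ecol t) <= 1 + delta.
    have sp : sparse (2 * K) (ecol (R:=R) t) by apply: (sparse_sub (supp_ecol t)); rewrite cards1.
    have [_ h] := RIP _ sp; by rewrite sqnorm_ecol mulr1 in h.
  have e1 : g ^+ 2 / (1 + delta) = al * g by rewrite /al; field; lra.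
  have e2 : al * (1 + delta) = g by rewrite /al; field; lra.
  rewrite e1 => h.
  have : al ^+ 2 * sqnorm (Phi *m ecol t) <= al ^+ 2 * (1 + delta) by rewrite ler_wpM2l ?sqr_ge0.
  nra.
have D0 : 0 <= g ^+ 2 / (1 + delta) by rewrite divr_ge0 ?sqr_ge0 //; lra.
set Gam := supp x :\: T k.
set X := kth_largest x Gam c.
have [s7|s7] := leP (7%:R^-1) s.
  apply: le_trans Dge; apply: le_trans D0.
  rewrite mulr_le0_ge0 ?sqr_ge0 // subr_le0.
  lra.
have c1 : (0 < c)%N.
  rewrite lt0n; apply/negP => /eqP c0; rewrite c0 mulr0n in ceil2.
  have : 0 < s * K%:R by rewrite mulr_gt0 // ltr0n.
  lra.
have cG : (c <= #|Gam|)%N.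
  rewrite /Gam cardsD cardT.
  have : (#|supp x :&: T k| <= k)%N by apply: leq_trans Ik; apply: subset_leq_card; apply: subsetIr.
  move: kc; clear; lia.
have [[j jG XE] pS] := kth_facts x (A:=Gam) (c:=c) (introT andP (conj c1 cG)).
rewrite -/X in XE pS.
set S := [set i in Gam | (X <= `|x i 0|)%R] in pS.
set p := #|S| in pS.
have jx : j \in supp x by move: jG; rewrite inE => /andP[].
have X0 : 0 < X by rewrite XE normr_gt0; move: jx; rewrite inE.
set kap := dyn_range x.
have kapX : forall i, i \in supp x -> `|x i 0| <= kap * X.
  move=> i ix; have := kappa_ge ix jx; rewrite -XE ler_pdivrMr //.
have kap1 : 1 <= kap.
  have := kapX j jx; rewrite -XE -{1}(mul1r X) ler_pM2r //.
have GamP : forall i, i \in Gam -> (i \in supp x) /\ (i \notin T k).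
  by move=> i; rewrite inE => /andP[].
have SG : forall i, i \in S -> i \in Gam by move=> i; rewrite inE => /andP[].
have SX : forall i, i \in S -> X <= `|x i 0| by move=> i; rewrite inE => /andP[].
set P : 'cV[R]_n := \col_i (if i \in S then x i 0 else 0).
set B : 'cV[R]_n := \col_i (if (i \in Gam) && (i \notin S) then x i 0 else 0).
set W : 'cV[R]_n := x - xs k - (P + B).
set U := supp x :|: T k.
have UK : (#|U| <= 2 * K)%N.
  have := cardsU (supp x) (T k); rewrite -/U cardT => h.
  have : (#|U| <= K + #|T k|)%N by rewrite h leq_subr.
  move: Ik kK; clear; lia.
have Wout : forall i, i \notin T k -> W i 0 = 0.
  move=> i iT; rewrite /W !mxE (supp_out Isupp iT) subr0.
  case iG : (i \in Gam).
    by case: (i \in S) => /=; rewrite ?addr0 ?add0r subrr.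
  have : i \notin supp x by move: iG; rewrite inE iT /= => /negbT.
  rewrite inE negbK => /eqP ->.
  have -> : (i \in S) = false by apply/negP => /SG; rewrite iG.
  by simpl; rewrite !add0r oppr0.
have suppW : supp W \subset T k by apply: supp_subP.
have suppWU : supp W \subset U by apply: subset_trans suppW (subsetUr _ _).
have suppP : supp P \subset U.
  apply: supp_subP => i iU; rewrite mxE; case iS: (i \in S) => //.
  by move: iU; rewrite inE (GamP _ (SG _ iS)).1.
have suppB : supp B \subset U.
  apply: supp_subP => i iU; rewrite mxE; case iG: (i \in Gam) => //.
  by move: iU; rewrite inE (GamP _ iG).1.
have PB0 : forall i, P i 0 * B i 0 = 0.
  by move=> i; rewrite !mxE; case: (i \in S); rewrite ?andbF ?mulr0 ?mul0r.
have PW0 : forall i, P i 0 * W i 0 = 0.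
  move=> i; rewrite [P i 0]mxE; case iS: (i \in S); last by rewrite mul0r.
  by rewrite Wout ?mulr0 // (GamP _ (SG _ iS)).2.
have BW0 : forall i, B i 0 * W i 0 = 0.
  move=> i; rewrite [B i 0]mxE; case iG: (i \in Gam); last by rewrite mul0r.
  by rewrite Wout ?mulr0 // (GamP _ iG).2.
have PBW0 : forall i, P i 0 * (B + W) i 0 = 0.
  by move=> i; rewrite [(B + W) i 0]mxE mulrDr PB0 PW0 addr0.
have PBW0' : forall i, W i 0 * (P + B) i 0 = 0.
  by move=> i; rewrite [(P + B) i 0]mxE mulrDr mulrC PW0 mulrC BW0 addr0.
have suppBW : supp (B + W) \subset U.
  by have := supp_lin 1 1 suppB suppWU; rewrite !scale1r.
have suppPB : supp (P + B) \subset U.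
  by have := supp_lin 1 1 suppP suppB; rewrite !scale1r.
have xE : P + B + W = x - xs k by rewrite /W addrC subrK.
have rE2 : r = Phi *m (P + B) + Phi *m W + v.
  by rewrite -mulmxDr xE /r /resid /y mulmxBr addrAC.
have rE : r = Phi *m P + Phi *m (B + W) + v.
  by rewrite rE2 !mulmxDr !addrA.
set a := N P; set b := N B; set w := N W; set V := N v.
set e := Num.sqrt (1 + delta); set q := Num.sqrt (p%:R : R); set G := `|g|.
have de : e ^+ 2 = 1 + delta by rewrite sqr_sqrtr.
have e0 : 0 <= e := sqrtr_ge0 _.
have pc : c%:R <= p%:R :> R by rewrite ler_nat.
have p1 : 1 <= p%:R :> R by rewrite ler1n; apply: leq_trans c1 pS.
have qE : q ^+ 2 = p%:R by rewrite sqr_sqrtr // ler0n.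
have q0 : 0 < q by rewrite sqrtr_gt0; apply: lt_le_trans ltr01 p1.
have RIPU : forall z, supp z \subset U ->
    (1 - delta) * sqnorm z <= sqnorm (Phi *m z) /\ sqnorm (Phi *m z) <= (1 + delta) * sqnorm z.
  by move=> z hz; apply: RIP; apply: sparse_sub hz UK.
have NPhi : forall z, supp z \subset U -> N (Phi *m z) <= e * N z.
  move=> z hz; apply: le_of_sq; first by rewrite mulr_ge0 ?N_ge0.
  by rewrite exprMn de !Nsq; case: (RIPU z hz).
have F0 : p%:R * X ^+ 2 <= sqnorm P.
  rewrite /sqnorm mulr_natl; apply: (sum_const_ge (A := S)) => i.
    exact: sqr_ge0.
  by move=> iS; rewrite mxE iS; apply: sq_le_abs (ltW X0) (SX i iS).
have aX : q * X <= a.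
  by apply: le_of_sq; [exact: N_ge0 | rewrite exprMn qE Nsq].
have Fb : sqnorm B <= K%:R * X ^+ 2.
  rewrite /sqnorm -cardT mulr_natl; apply: (sum_const_le (A := supp x)) => i hi;
    rewrite mxE; case iG: (i \in Gam) => /=; rewrite ?expr2 ?mul0r //.
  - by move: hi; rewrite (GamP _ iG).1.
  - case iS: (i \in S) => /=; last first.
      rewrite -expr2; apply: abs_le_sq; apply: ltW; rewrite ltNge.
      by move: iS; rewrite inE iG /= => ->.
    by rewrite mul0r sqr_ge0.
  - by rewrite sqr_ge0.
have Fx : sqnorm x <= K%:R * (kap * X) ^+ 2.
  rewrite /sqnorm -cardT mulr_natl; apply: (sum_const_le (A := supp x)) => i hi.
    by move: hi; rewrite inE negbK => /eqP ->; rewrite expr2 mul0r.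
  by apply: abs_le_sq; apply: kapX.
have Fv : sqnorm v <= delta * (1 + delta) * p%:R * X ^+ 2.
  have h2 : sqnorm (Phi *m x) <= (1 + delta) * sqnorm x.
    by case: (RIPU x (subsetUl _ _)).
  have ds0 : 0 < delta * s by rewrite mulr_gt0.
  have h1 := SNR; rewrite mulrAC ler_pdivrMr // in h1.
  have kap2 : 0 < kap ^+ 2 by rewrite exprn_gt0 //; apply: lt_le_trans ltr01 kap1.
  have h3 : kap ^+ 2 * sqnorm v <= kap ^+ 2 * (delta * s * (1 + delta) * K%:R * X ^+ 2).
    apply: (le_trans h1); rewrite mulrC.
    have : sqnorm (Phi *m x) <= (1 + delta) * (K%:R * (kap * X) ^+ 2).
      by apply: le_trans h2 _; rewrite ler_wpM2l.
    move=> h4; apply: le_trans (ler_wpM2l (ltW ds0) h4) _.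
    by rewrite le_eqVlt; apply/orP; left; apply/eqP; ring.
  rewrite ler_pM2l // in h3.
  apply: le_trans h3 _.
  have sK : s * K%:R <= p%:R by apply: le_trans ceil2 pc.
  have h5 : 0 <= delta * (1 + delta) * X ^+ 2 by rewrite !mulr_ge0 ?sqr_ge0 // ltW.
  have := ler_wpM2l h5 sK.
  move=> h6; apply: le_trans _ (le_trans h6 _).
    by rewrite le_eqVlt; apply/orP; left; apply/eqP; ring.
  by rewrite le_eqVlt; apply/orP; left; apply/eqP; ring.
have G0 : 0 <= G := normr_ge0 g.
have Fcs : \sum_i `|P i 0| <= q * a.
  set one : 'cV[R]_n := \col_i (if i \in S then 1 else 0).
  set absP : 'cV[R]_n := \col_i `|P i 0|.
  have e1 : dot one absP = \sum_i `|P i 0|.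
    apply: eq_bigr => i _; rewrite [one i 0]mxE [absP i 0]mxE.
    case iS: (i \in S); first by rewrite mul1r.
    by rewrite mul0r mxE iS normr0.
  have e2 : N one = q.
    rewrite /N /q; congr Num.sqrt.
    rewrite /sqnorm (bigID (mem S)) /= [X in _ + X]big1 => [|i /negbTE iS]; last first.
      by rewrite mxE iS expr2 mul0r.
    rewrite addr0 (eq_bigr (fun _ => 1)) => [|i iS]; last by rewrite mxE iS expr1n.
    by rewrite sumr_const.
  have e3 : N absP = a.
    rewrite /N /a /N; congr Num.sqrt; apply: eq_bigr => i _.
    by rewrite mxE real_normK // num_real.
  by rewrite -e1 -e2 -e3; case: (CSN one absP).
have F4 : dot (Phi *m P) r <= G * (q * a).
  rewrite dot_mul; apply: le_trans (_ : _ <= \sum_i `|P i 0| * G) _.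
    apply: ler_sum => i _; case iS: (i \in S).
      have Hi : `|colcorr Phi i r| <= G := Hmax i (GamP _ (SG _ iS)).2.
      apply: le_trans (ler_norm _) _; rewrite normrM; by rewrite ler_wpM2l.
    by rewrite mxE iS !mul0r normr0 mul0r.
  by rewrite -mulr_suml mulrC ler_wpM2l.
have F5 : (1 - delta) * a ^+ 2 - delta * a * (b + w) - e * a * V <= dot (Phi *m P) r.
  rewrite rE !dotDr -sqnormE.
  have h1 : (1 - delta) * a ^+ 2 <= sqnorm (Phi *m P) by rewrite Nsq; case: (RIPU P suppP).
  have [h2 _] := near_orthN d0 RIP UK suppP suppBW PBW0.
  have h3 : N (B + W) <= b + w.
    apply: le_of_sq; first by rewrite addr_ge0 ?N_ge0.
    rewrite Nsq sqnormD (dot_disj BW0) mulr0 addr0 -!Nsq -/b -/w.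
    have hbw := mulr_ge0 (N_ge0 B) (N_ge0 W).
    rewrite -subr_ge0; apply: le_trans (mulr_ge0 (ler0n _ 2) hbw) _; apply: eqle; rewrite /b /w; ring.
  have h4 : - (delta * a * (b + w)) <= - (delta * a * N (B + W)).
    by rewrite lerN2 ler_wpM2l // mulr_ge0 ?N_ge0 // ltW.
  have [h5 _] := CSN (Phi *m P) v.
  have h6 : - (e * a * V) <= - (N (Phi *m P) * N v).
    by rewrite lerN2 ler_wpM2r ?N_ge0 // NPhi.
  exact: lerD (lerD h1 (le_trans h4 h2)) (le_trans h6 h5).
have F6 : (1 - delta) * w <= delta * (a + b) + e * V.
  have o : dot (Phi *m W) r = 0 := orth Iopt Isupp suppW.
  rewrite rE2 !dotDr -sqnormE in o.
  have h1 : (1 - delta) * w ^+ 2 <= sqnorm (Phi *m W) by rewrite Nsq; case: (RIPU W suppWU).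
  have [h2 _] := near_orthN d0 RIP UK suppWU suppPB PBW0'.
  have h3 : N (P + B) <= a + b.
    apply: le_of_sq; first by rewrite addr_ge0 ?N_ge0.
    rewrite Nsq sqnormD (dot_disj PB0) mulr0 addr0 -!Nsq -/a -/b.
    have hbw := mulr_ge0 (N_ge0 P) (N_ge0 B).
    rewrite -subr_ge0; apply: le_trans (mulr_ge0 (ler0n _ 2) hbw) _; apply: eqle; rewrite /a /b; ring.
  have [h5 _] := CSN (Phi *m W) v.
  have k2 : - dot (Phi *m W) (Phi *m (P + B)) <= delta * w * (a + b).
    rewrite lerNl; apply: le_trans h2.
    by rewrite lerN2 ler_wpM2l // mulr_ge0 ?N_ge0 // ltW.
  have k3 : - dot (Phi *m W) v <= e * w * V.
    rewrite lerNl; apply: le_trans h5.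
    by rewrite lerN2 ler_wpM2r ?N_ge0 // NPhi.
  have oS : sqnorm (Phi *m W) = - dot (Phi *m W) (Phi *m (P + B)) - dot (Phi *m W) v.
    apply/eqP; rewrite -subr_eq0; apply/eqP.
    have -> : forall d1 S d2 : R, S - (- d1 - d2) = d1 + S + d2 by move=> *; ring.
    exact: o.
  have hw2 : (1 - delta) * w * w <= (delta * (a + b) + e * V) * w.
    apply: le_trans (_ : _ <= delta * w * (a + b) + e * w * V) _.
      by rewrite -mulrA -expr2; apply: le_trans h1 _; rewrite oS lerD.
    by apply: eqle; ring.
  have [w0|wpos] := eqVneq w 0.
    by rewrite w0 mulr0 addr_ge0 // ?mulr_ge0 ?addr_ge0 ?N_ge0 // ltW.
  have wp : 0 < w by rewrite lt_def wpos N_ge0.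
  by rewrite -(ler_pM2r wp).
have HG := core dE s0 s7 q0 X0 (N_ge0 B) (N_ge0 W) (N_ge0 v) e0 de aX
  (_ : b ^+ 2 <= K%:R * X ^+ 2) (_ : s * K%:R <= q ^+ 2)
  (_ : V ^+ 2 <= delta * (1 + delta) * q ^+ 2 * X ^+ 2) (le_trans F5 F4) F6.
have := final dE s0 s7 X0 (erefl G) Dge (HG _ _ _).
apply.
- by rewrite Nsq.
- by rewrite qE; apply: le_trans ceil2 pc.
- by rewrite Nsq qE.
Qed.
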